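(* Let $\mathcal{A}$ be a complex unital $*$-algebra with a fixed generating set $\{a_i : i\in I\}$ closed under the involution, and let $\delta(\mathcal{A})$ be as defined in the context. Let $\mathcal{B}\subseteq\mathcal{C}$ be $*$-invariant linear subspaces of $\mathcal{A}$, both connected to $1$, and let $m\ge 1$ be an integer with $\mathcal{B}^{[m]}\subseteq\mathcal{C}$ and $2m\ge\delta(\mathcal{A})$. Let $L$ be a hermitian linear functional on $\mathcal{C}^2$ which is a flat extension with respect to $\mathcal{B}$, i.e. $\mathcal{C}=\mathcal{B}+K_L(\mathcal{C})$. Then: (1) There exists a unique hermitian linear functional $\mathcal{L}$ on $\mathcal{A}$ extending $L$ such that $\mathcal{A}=\mathcal{C}+K_{\mathcal{L}}(\mathcal{A})$ (equivalently, such that $\mathcal{A}=\mathcal{B}+K_{\mathcal{L}}(\mathcal{A})$). (2) Let $\mathcal{B}'\subseteq\mathcal{B}$ be any linear subspace with $1\in\mathcal{B}'$ and $\mathcal{C}=\mathcal{B}'\oplus K_L(\mathcal{C})$ (direct sum of vector spaces); such a choice is possible unless $L\equiv 0$. Then $\mathcal{A}=\mathcal{B}'\oplus K_{\mathcal{L}}(\mathcal{A})$, the form $\langle\cdot,\cdot\rangle_{\mathcal{L}}$ is non-degenerate on $\mathcal{B}'$, and the projection of $\mathcal{C}$ onto $\mathcal{B}'$ along $K_L(\mathcal{C})$ extends to the projection $\pi_{\mathcal{L}}:\mathcal{A}\to\mathcal{B}'$ along $K_{\mathcal{L}}(\mathcal{A})$. The formula $\rho_{\mathcal{L}}(a)b=\pi_{\mathcal{L}}(ab)$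 ($a\in\mathcal{A}$, $b\in\mathcal{B}'$) defines a $*$-representation $\rho_{\mathcal{L}}$ of $\mathcal{A}$ on $(\mathcal{B}',\langle\cdot,\cdot\rangle_{\mathcal{L}})$ with $\mathcal{L}(a)=\langle\rho_{\mathcal{L}}(a)1,1\rangle_{\mathcal{L}}$ for all $a\in\mathcal{A}$. (3) If moreover $L$ is positive on $\mathcal{C}^2$, then $\mathcal{L}$ is a positive linear functional on $\mathcal{A}$ and $\langle\cdot,\cdot\rangle_{\mathcal{L}}$ is a scalar product (positive definite) on $\mathcal{B}'$.
   Context: $\mathcal{A}$ is a complex unital $*$-algebra with unit $1$. For a $*$-invariant linear subspace $\mathcal{C}\ni 1$ of $\mathcal{A}$, $\mathcal{C}^2:=\mathrm{Lin}\{ab: a,b\in\mathcal{C}\}$. A linear functional $L$ on a $*$-invariant subspace is hermitian if $L(b^* )=\overline{L(b)}$. For hermitian $L$ on $\mathcal{C}^2$, put $\langle a,b\rangle_L:=L(b^*a)$ for $a,b\in\mathcal{C}$ and $K_L(\mathcal{C}):=\{a\in\mathcal{C}:\langle a,b\rangle_L=0\ \forall b\in\mathcal{C}\}$. $L$ is positive if $L(a^*a)\ge 0$ for all $a\in\mathcal{C}$. For $\mathcal{B}\subseteq\mathcal{C}$ both $*$-invariant with $1\in\mathcal{B}$, a hermitian $L$ on $\mathcal{C}^2$ is a flat extension with respect to $\mathcal{B}$ if $\mathcal{C}=\mathcal{B}+K_L(\mathcal{C})$. A $*$-representation of $\mathcal{A}$ on a vector space $V$ with hermitian sesquilinear form $\langle\cdot,\cdot\rangle$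 is an algebra homomorphism $\rho$ from $\mathcal{A}$ into linear operators on $V$ with $\rho(1)=I$ and $\langle\rho(a)v,w\rangle=\langle v,\rho(a^* )w\rangle$. Fix generators $\{a_i:i\in I\}$ of $\mathcal{A}$ such that for each $i$ there is $j$ with $a_i^*=a_j$. For a subspace $V\subseteq\mathcal{A}$, its prolongation is $V^+:=V+\mathrm{Lin}\{a_iv: i\in I, v\in V\}$; $V^{[0]}=V$, $V^{[l+1]}=(V^{[l]})^+$. $V$ is connected to $1$ if $1\in V$ and there are subspaces $\mathbb{C}\cdot 1=V_0\subseteq V_1\subseteq\cdots\subseteq V$ with $\bigcup_l V_l=V$ and $V_{l+1}\subseteq V_l^+$. Let $\mathcal{F}=\mathbb{C}\langle x_i:i\in I\rangle$ be the free unital $*$-algebra with $x_i^*=x_j$ whenever $a_i^*=a_j$, and $\sigma:\mathcal{F}\to\mathcal{A}$ the $*$-homomorphism with $\sigma(x_i)=a_i$; $\mathcal{I}=\ker\sigma$. The index of $p\in\mathcal{F}$ is the smallest $l$ such that $p$ is a linear combination of words of length $\le l$ in the $x_i$. For a set $S$ generating $\mathcal{I}$ as a two-sided ideal, $\delta(S)\in\mathbb{N}\cup\{\infty\}$ is the maximal index of elements of $S$, and $\delta(\mathcal{A})$ is the minimum of $\delta(S)$ over all such $S$. *)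

(* Defs.v *)
From HB Require Import structures.
From mathcomp Require Import all_boot all_order all_algebra.
From Stdlib Require List.
Set Implicit Arguments. Unset Strict Implicit. Unset Printing Implicit Defensive.
Import Order.TTheory GRing.Theory Num.Theory.
Local Open Scope ring_scope.

Definition is_involution (C : numClosedFieldType) (A : algType C)
  (star : A -> A) : Prop :=
  [/\ forall x y, star (x + y) = star x + star y,
      forall (c : C) x, star (c *: x) = c^* *: star x,
      forall x y, star (x * y) = star y * star x
    & forall x, star (star x) = x].

Definition subspace (C : numClosedFieldType) (A : lmodType C) (V : A -> Prop) : Prop :=
  [/\ V 0, forall x y, V x -> V y -> V (x + y)
    & forall (c : C) x, V x -> V (c *: x)].

Definition star_invariant (A : Type) (star : A -> A) (V : A -> Prop) : Prop :=
  forall x, V x -> V (star x).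

Inductive inspan (C : numClosedFieldType) (A : lmodType C) (P : A -> Prop) : A -> Prop :=
| inspan_gen x : P x -> inspan P x
| inspan0 : inspan P 0
| inspanD x y : inspan P x -> inspan P y -> inspan P (x + y)
| inspanZ (c : C) x : inspan P x -> inspan P (c *: x).

Definition sq (C : numClosedFieldType) (A : algType C) (V : A -> Prop) : A -> Prop :=
  inspan (fun x => exists a b, [/\ V a, V b & x = a * b]).

Definition prol (C : numClosedFieldType) (A : algType C) (I : Type) (gen : I -> A)
  (V : A -> Prop) : A -> Prop :=
  inspan (fun x => V x \/ exists i v, V v /\ x = gen i * v).

Fixpoint prol_iter (C : numClosedFieldType) (A : algType C) (I : Type) (gen : I -> A)
  (l : nat) (V : A -> Prop) : A -> Prop :=
  match l with
  | 0%N => V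
  | l'.+1 => prol gen (prol_iter gen l' V)
  end.

Definition connected_to_1 (C : numClosedFieldType) (A : algType C) (I : Type)
  (gen : I -> A) (V : A -> Prop) : Prop :=
  V 1 /\
  exists Vs : nat -> A -> Prop,
    (forall l, subspace (Vs l)) /\
    (forall x, Vs 0%N x <-> exists c : C, x = c *: 1) /\
    (forall l x, Vs l x -> Vs l.+1 x) /\
    (forall l x, Vs l x -> V x) /\
    (forall x, V x -> exists l, Vs l x) /\
    (forall l x, Vs l.+1 x -> prol gen (Vs l) x).

Definition linear_on (C : numClosedFieldType) (A : lmodType C) (W : A -> Prop)
  (L : A -> C) : Prop :=
  (forall x y, W x -> W y -> L (x + y) = L x + L y) /\
  (forall (c : C) x, W x -> L (c *: x) = c * L x).

Definition hermitian_on (C : numClosedFieldType) (A : Type) (star : A -> A)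
  (W : A -> Prop) (L : A -> C) : Prop :=
  forall b, W b -> L (star b) = (L b)^*.

Definition sform (C : numClosedFieldType) (A : algType C) (star : A -> A)
  (L : A -> C) (a b : A) : C := L (star b * a).

Definition kerL (C : numClosedFieldType) (A : algType C) (star : A -> A)
  (L : A -> C) (V : A -> Prop) : A -> Prop :=
  fun a => V a /\ forall b, V b -> sform star L a b = 0.

Definition positive_on (C : numClosedFieldType) (A : algType C) (star : A -> A)
  (V : A -> Prop) (L : A -> C) : Prop :=
  forall a, V a -> 0 <= L (star a * a).

Definition is_sum (A : zmodType) (V P Q : A -> Prop) : Prop :=
  forall x, V x <-> exists p q, [/\ P p, Q q & x = p + q].

Definition is_direct_sum (A : zmodType) (V P Q : A -> Prop) : Prop :=
  is_sum V P Q /\ forall x, P x -> Q x -> x = 0.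

Definition star_rep (C : numClosedFieldType) (A : algType C) (star : A -> A)
  (V : A -> Prop) (f : A -> A -> C) (rho : A -> A -> A) : Prop :=
  (forall a v, V v -> V (rho a v)) /\
  (forall a v w, V v -> V w -> rho a (v + w) = rho a v + rho a w) /\
  (forall a (c : C) v, V v -> rho a (c *: v) = c *: rho a v) /\
  (forall a b v, V v -> rho (a + b) v = rho a v + rho b v) /\
  (forall (c : C) a v, V v -> rho (c *: a) v = c *: rho a v) /\
  (forall a b v, V v -> rho (a * b) v = rho a (rho b v)) /\
  (forall v, V v -> rho 1 v = v) /\
  (forall a v w, V v -> V w -> f (rho a v) w = f v (rho (star a) w)).

(* elements of F: coefficient functions on words; those of finite support
   are the noncommutative polynomials *)
Definition fpoly (C : numClosedFieldType) (I : Type) := seq I -> C.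

Definition fin_supp (C : numClosedFieldType) (I : Type) (p : fpoly C I) : Prop :=
  exists s : seq (seq I), forall w, p w <> 0 -> List.In w s.

Definition fadd (C : numClosedFieldType) (I : Type) (p q : fpoly C I) : fpoly C I :=
  fun w => p w + q w.

Definition fmul (C : numClosedFieldType) (I : Type) (p q : fpoly C I) : fpoly C I :=
  fun w => \sum_(k < (size w).+1) p (take k w) * q (drop k w).

Inductive ideal_gen (C : numClosedFieldType) (I : Type) (S : fpoly C I -> Prop)
  : fpoly C I -> Prop :=
| ig_gen p : S p -> ideal_gen S p
| ig_zero : ideal_gen S (fun _ => 0)
| ig_add p q : ideal_gen S p -> ideal_gen S q -> ideal_gen S (fadd p q)
| ig_lmul u p : fin_supp u -> ideal_gen S p -> ideal_gen S (fmul u p)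
| ig_rmul p u : fin_supp u -> ideal_gen S p -> ideal_gen S (fmul p u)
| ig_ext p q : (forall w, p w = q w) -> ideal_gen S p -> ideal_gen S q.

Definition word (C : numClosedFieldType) (A : algType C) (I : Type) (gen : I -> A)
  (w : seq I) : A := \prod_(i <- w) gen i.

Definition sigma_rel (C : numClosedFieldType) (A : algType C) (I : Type)
  (gen : I -> A) (p : fpoly C I) (x : A) : Prop :=
  exists s : seq (seq I),
    [/\ List.NoDup s, forall w, p w <> 0 -> List.In w s
      & x = \sum_(w <- s) p w *: word gen w].

Definition ker_sigma (C : numClosedFieldType) (A : algType C) (I : Type)
  (gen : I -> A) (p : fpoly C I) : Prop := sigma_rel gen p 0.

Definition generates (C : numClosedFieldType) (A : algType C) (I : Type)
  (gen : I -> A) : Prop := forall x : A, exists p, sigma_rel gen p x.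

Definition index_le (C : numClosedFieldType) (I : Type) (p : fpoly C I) (n : nat) : Prop :=
  forall w, p w <> 0 -> (size w <= n)%N.

(* delta(A) <= n : some generating set S of the ideal ker sigma has delta(S) <= n
   (delta(A) is a minimum over a subset of N u {oo}, so this is exactly
   "delta(A) <= n"). *)
Definition delta_le (C : numClosedFieldType) (A : algType C) (I : Type)
  (gen : I -> A) (n : nat) : Prop :=
  exists S : fpoly C I -> Prop,
    (forall p, ker_sigma gen p <-> ideal_gen S p) /\
    (forall p, S p -> index_le p n).

(* Main.v *)
Require Import Defs.
From HB Require Import structures.
From mathcomp Require Import all_boot all_order all_algebra.
From mathcomp Require Import boolp classical_sets.
From mathcomp Require Import zify ring.
Import Order.TTheory GRing.Theory Num.Theory.
Local Open Scope ring_scope.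

Lemma In_mem (T : eqType) (x : T) (s : seq T) : List.In x s <-> x \in s.
Proof.
elim: s => [|y s IH] //=; rewrite in_cons; split.
- by case=> [->|/IH ->]; rewrite ?eqxx ?orbT.
- by case/orP=> [/eqP ->|/IH]; [left|right].
Qed.
Lemma NoDup_uniq (T : eqType) (s : seq T) : List.NoDup s <-> uniq s.
Proof.
elim: s => [|y s IH] /=; first by split=> // _; constructor.
split.
- move=> H; inversion H; subst; apply/andP; split; last by apply/IH.
  by apply/negP => /In_mem.
- case/andP=> Hy Hu; constructor; last by apply/IH.
  by move/In_mem; apply/negP.
Qed.
Lemma sum_indep (T : eqType) (V : zmodType) (F : T -> V) (s1 s2 : seq T) :
  uniq s1 -> uniq s2 -> (forall x, F x != 0 -> x \in s1) ->
  (forall x, F x != 0 -> x \in s2) ->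
  \sum_(x <- s1) F x = \sum_(x <- s2) F x.
Proof.
move=> u1 u2 h1 h2.
have E s : \sum_(x <- s) F x = \sum_(x <- [seq x <- s | F x != 0]) F x.
  rewrite big_filter [RHS]big_mkcond; apply: eq_bigr => x _.
  by case: eqP.
rewrite (E s1) (E s2); apply: perm_big; apply: uniq_perm.
- exact: filter_uniq. - exact: filter_uniq.
move=> x; rewrite !mem_filter; case: (F x != 0) /idP => //= Fx.
by rewrite (h1 _ Fx) (h2 _ Fx).
Qed.

Lemma sum_ord_iota (V : zmodType) n (F : nat -> V) :
  \sum_(i < n) F i = \sum_(i <- iota 0 n) F i.
Proof. by rewrite -(big_mkord xpredT) /index_iota subn0. Qed.

Section Main.
Variables (C : numClosedFieldType) (A : algType C) (star : A -> A)
  (I : eqType) (gen : I -> A) (Bsp Csp : A -> Prop) (m : nat) (L : A -> C).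
Hypotheses (Hinv : is_involution star) (Hgen : generates gen)
  (Hgs : forall i, exists j, star (gen i) = gen j)
  (HB : subspace Bsp) (HBs : star_invariant star Bsp)
  (HC : subspace Csp) (HCs : star_invariant star Csp)
  (HBC : forall x, Bsp x -> Csp x) (HconC : connected_to_1 gen Csp)
  (Hm : (1 <= m)%N) (Hpro : forall x, prol_iter gen m Bsp x -> Csp x)
  (Hdelta : delta_le gen (2 * m))
  (HLlin : linear_on (sq Csp) L) (HLh : hermitian_on star (sq Csp) L)
  (Hflat : is_sum Csp Bsp (kerL star L Csp)).

Lemma starD x y : star (x + y) = star x + star y. Proof. by case: Hinv. Qed.
Lemma starZ (c : C) x : star (c *: x) = c^* *: star x. Proof. by case: Hinv. Qed.
Lemma starM x y : star (x * y) = star y * star x. Proof. by case: Hinv. Qed.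
Lemma starK x : star (star x) = x. Proof. by case: Hinv. Qed.
Lemma star0 : star 0 = 0.
Proof. have := starZ 0 0. rewrite rmorph0 !scale0r. done. Qed.
Lemma starN x : star (- x) = - star x.
Proof. by rewrite -scaleN1r starZ rmorphN1 scaleN1r. Qed.
Lemma starB x y : star (x - y) = star x - star y.
Proof. by rewrite starD starN. Qed.
Lemma star1 : star 1 = 1.
Proof.
have h : star (star 1 * 1) = star 1 * star (star 1) by rewrite starM.
by rewrite mulr1 starK mulr1 in h.
Qed.
Lemma star_sum (T : Type) (s : seq T) (F : T -> A) :
  star (\sum_(x <- s) F x) = \sum_(x <- s) star (F x).
Proof. elim: s => [|x s IH]; first by rewrite !big_nil star0.
by rewrite !big_cons starD IH. Qed.

Definition J i := proj1_sig (cid (Hgs i)).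
Lemma HJ i : star (gen i) = gen (J i).
Proof. exact: (proj2_sig (cid (Hgs i))). Qed.
Lemma HJ' i : star (gen (J i)) = gen i.
Proof. by rewrite -HJ starK. Qed.

Section Sub.
Variable V : A -> Prop.
Hypothesis HV : subspace V.
Lemma sub0 : V 0. Proof. by case: HV. Qed.
Lemma subD x y : V x -> V y -> V (x + y). Proof. by case: HV => _ h _; apply: h. Qed.
Lemma subZ (c : C) x : V x -> V (c *: x). Proof. by case: HV => _ _ h; apply: h. Qed.
Lemma subN x : V x -> V (- x). Proof. by move=> h; rewrite -scaleN1r; apply: subZ. Qed.
Lemma subB x y : V x -> V y -> V (x - y). Proof. by move=> *; apply: subD => //; apply: subN. Qed.
Lemma subsum (T : eqType) (s : seq T) (F : T -> A) :
  (forall x, x \in s -> V (F x)) -> V (\sum_(x <- s) F x).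
Proof.
elim: s => [|x s IH] H; first by rewrite big_nil; apply: sub0.
rewrite big_cons.
by apply: subD; [apply: H; rewrite mem_head | apply: IH => y hy; apply: H; rewrite in_cons hy orbT].
Qed.
End Sub.
Arguments sub0 {V}. Arguments subD {V}. Arguments subZ {V}. Arguments subN {V}.
Arguments subB {V}. Arguments subsum {V}.

Lemma inspan_sub (P : A -> Prop) : subspace (inspan P).
Proof. split; [exact: inspan0 | exact: inspanD | exact: inspanZ]. Qed.

Lemma C1 : Csp 1. Proof. by case: HconC. Qed.
Lemma sq_sub : subspace (sq Csp). Proof. exact: inspan_sub. Qed.
Lemma sqM a b : Csp a -> Csp b -> sq Csp (a * b).
Proof. by move=> ha hb; apply: inspan_gen; exists a, b. Qed.
Lemma sqC c : Csp c -> sq Csp c.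
Proof. by move=> h; rewrite -[c]mulr1; apply: sqM => //; apply: C1. Qed.
Lemma sqs a b : Csp a -> Csp b -> sq Csp (star a * b).
Proof. by move=> ha hb; apply: sqM => //; apply: HCs. Qed.

Lemma LD x y : sq Csp x -> sq Csp y -> L (x + y) = L x + L y.
Proof. by case: HLlin => h _; apply: h. Qed.
Lemma LZ (c : C) x : sq Csp x -> L (c *: x) = c * L x.
Proof. by case: HLlin => _ h; apply: h. Qed.
Lemma L0 : L 0 = 0.
Proof. have := @LZ 0 0 (sub0 sq_sub). rewrite scale0r mul0r. done. Qed.
Lemma LN x : sq Csp x -> L (- x) = - L x.
Proof. by move=> h; rewrite -scaleN1r LZ // mulN1r. Qed.
Lemma LB x y : sq Csp x -> sq Csp y -> L (x - y) = L x - L y.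
Proof. by move=> *; rewrite LD ?LN //; exact: (subN sq_sub). Qed.
Lemma Lsum (T : eqType) (s : seq T) (F : T -> A) :
  (forall x, x \in s -> sq Csp (F x)) -> L (\sum_(x <- s) F x) = \sum_(x <- s) L (F x).
Proof.
elim: s => [|x s IH] H; first by rewrite !big_nil L0.
rewrite !big_cons.
have h1 : sq Csp (F x) by apply: H; rewrite mem_head.
have h2 : forall y, y \in s -> sq Csp (F y) by move=> y hy; apply: H; rewrite in_cons hy orbT.
by rewrite LD ?IH //; exact: (subsum sq_sub _ _ _ h2).
Qed.

Notation sf := (sform star L).
Lemma sfE x y : sf x y = L (star y * x). Proof. by []. Qed.

Lemma sfD1 x1 x2 y : Csp x1 -> Csp x2 -> Csp y -> sf (x1 + x2) y = sf x1 y + sf x2 y.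
Proof. by move=> *; rewrite !sfE mulrDr LD //; apply: sqs. Qed.
Lemma sfZ1 (c : C) x y : Csp x -> Csp y -> sf (c *: x) y = c * sf x y.
Proof. by move=> *; rewrite !sfE -scalerAr LZ //; apply: sqs. Qed.
Lemma sfconj x y : Csp x -> Csp y -> sf x y = (sf y x)^*.
Proof.
move=> hx hy; rewrite !sfE -HLh; last by apply: sqs.
by rewrite starM starK.
Qed.
Lemma sfD2 x y1 y2 : Csp x -> Csp y1 -> Csp y2 -> sf x (y1 + y2) = sf x y1 + sf x y2.
Proof.
by move=> hx h1 h2; rewrite !sfE starD mulrDl LD //; apply: sqs.
Qed.
Lemma sfZ2 (c : C) x y : Csp x -> Csp y -> sf x (c *: y) = c^* * sf x y.
Proof.
by move=> hx hy; rewrite !sfE starZ -scalerAl LZ //; apply: sqs.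
Qed.
Lemma sfN1 x y : Csp x -> Csp y -> sf (- x) y = - sf x y.
Proof. by move=> *; rewrite -scaleN1r sfZ1 // mulN1r. Qed.
Lemma sfB1 x1 x2 y : Csp x1 -> Csp x2 -> Csp y -> sf (x1 - x2) y = sf x1 y - sf x2 y.
Proof. by move=> h1 h2 hy; rewrite sfD1 ?sfN1 //; exact: (subN HC). Qed.
Lemma sfN2 x y : Csp x -> Csp y -> sf x (- y) = - sf x y.
Proof. by move=> *; rewrite -scaleN1r sfZ2 // rmorphN1 mulN1r. Qed.
Lemma sfB2 x y1 y2 : Csp x -> Csp y1 -> Csp y2 -> sf x (y1 - y2) = sf x y1 - sf x y2.
Proof. by move=> hx h1 h2; rewrite sfD2 ?sfN2 //; exact: (subN HC). Qed.
Lemma sf0l y : sf 0 y = 0. Proof. by rewrite sfE mulr0 L0. Qed.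
Lemma sf1 x : sf x 1 = L x. Proof. by rewrite sfE star1 mul1r. Qed.

Notation K := (kerL star L Csp).
Lemma KC k : K k -> Csp k. Proof. by case. Qed.
Lemma K1 k y : K k -> Csp y -> sf k y = 0. Proof. by case=> _ h; apply: h. Qed.
Lemma K2 k y : K k -> Csp y -> sf y k = 0.
Proof. by move=> hk hy; rewrite (sfconj _ _ hy (KC _ hk)) (K1 _ _ hk hy) rmorph0. Qed.
Lemma K_sub : subspace K.
Proof.
split.
- by split; [apply: (sub0 HC) | move=> b _; apply: sf0l].
- move=> x y [hx Hx] [hy Hy]; split; first by apply: (subD HC).
  by move=> b hb; rewrite sfD1 // Hx // Hy // addr0.
- move=> c x [hx Hx]; split; first by apply: (subZ HC).
  by move=> b hb; rewrite sfZ1 // Hx // mulr0.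
Qed.

Lemma prol_incl (V : A -> Prop) x : V x -> prol gen V x.
Proof. by move=> h; apply: inspan_gen; left. Qed.
Lemma prol_gen (V : A -> Prop) i v : V v -> prol gen V (gen i * v).
Proof. by move=> h; apply: inspan_gen; right; exists i, v. Qed.
Lemma prol_iter_add l k x : prol_iter gen l Bsp x -> prol_iter gen (l + k) Bsp x.
Proof.
elim: k => [|k IH] h; first by rewrite addn0.
by rewrite addnS /=; apply: prol_incl; apply: IH.
Qed.
Lemma prol_iter_C l x : (l <= m)%N -> prol_iter gen l Bsp x -> Csp x.
Proof.
move=> hl h; apply: Hpro; rewrite -(subnKC hl); exact: prol_iter_add.
Qed.
Lemma Bplus i v : Bsp v -> Csp (gen i * v).
Proof.
move=> hv; apply: (prol_iter_C 1) => //=; exact: prol_gen.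
Qed.

Lemma flat_dec y : Csp y -> exists b k, [/\ Bsp b, K k & y = b + k].
Proof. by move/Hflat. Qed.

Definition Mset := inspan (fun x => K x \/ exists i k, K k /\ x = gen i * k).

Lemma MK z : Mset z -> Csp z -> K z.
Proof.
move=> hz hzC.
have H : forall b, Bsp b -> forall z, Mset z -> sq Csp (star b * z) /\ L (star b * z) = 0.
  move=> b hb {hz hzC} z; elim => {z}.
  - move=> x [hx|[i [k [hk ->]]]].
    + split; first by apply: sqs => //; [apply: HBC | apply: KC].
      by rewrite -sfE; apply: K1 => //; apply: HBC.
    + have e : star b * (gen i * k) = star (gen (J i) * b) * k.
        by rewrite starM HJ' mulrA.
      have hC : Csp (gen (J i) * b) by apply: Bplus.
      rewrite e; split; first by apply: sqs => //; apply: KC.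
      by rewrite -sfE; apply: K1.
  - by rewrite mulr0 L0; split => //; apply: (sub0 sq_sub).
  - move=> x y _ [h1 e1] _ [h2 e2].
    by rewrite mulrDr LD // e1 e2 addr0; split => //; apply: (subD sq_sub).
  - move=> c x _ [h1 e1].
    by rewrite -scalerAr LZ // e1 mulr0; split => //; apply: (subZ sq_sub).
split => // y hy.
case: (flat_dec _ hy) => b [k [hb hk ->]].
rewrite sfD2 //; last by apply: KC.
  rewrite (K2 _ _ hk hzC) addr0 sfE.
  by case: (H b hb z hz).
by apply: HBC.
Qed.

Lemma word_nil : word gen [::] = 1. Proof. by rewrite /word big_nil. Qed.
Lemma word_cons i w : word gen (i :: w) = gen i * word gen w.
Proof. by rewrite /word big_cons. Qed.
Lemma word_cat w1 w2 : word gen (w1 ++ w2) = word gen w1 * word gen w2.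
Proof. by rewrite /word big_cat. Qed.
Definition wstar (w : seq I) := rev (map J w).
Lemma size_wstar w : size (wstar w) = size w.
Proof. by rewrite /wstar size_rev size_map. Qed.
Lemma wstar_cons i w : wstar (i :: w) = wstar w ++ [:: J i].
Proof. by rewrite /wstar /= rev_cons cats1. Qed.
Lemma star_word w : star (word gen (wstar w)) = word gen w.
Proof.
elim: w => [|i w IH]; first by rewrite /wstar /= word_nil star1.
by rewrite wstar_cons word_cat starM IH word_cons word_nil mulr1 HJ' word_cons.
Qed.

Definition valid (p : seq I -> C) (s : seq (seq I)) :=
  uniq s /\ forall w, p w != 0 -> w \in s.

Lemma valid_sum (V : lmodType C) (p : seq I -> C) s1 s2 (G : seq I -> V) :
  valid p s1 -> valid p s2 ->
  \sum_(w <- s1) p w *: G w = \sum_(w <- s2) p w *: G w.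
Proof.
move=> [u1 h1] [u2 h2]; apply: sum_indep => // w hw.
  by apply: h1; apply: contraNneq hw => ->; rewrite scale0r.
by apply: h2; apply: contraNneq hw => ->; rewrite scale0r.
Qed.

Lemma fin_valid p : fin_supp p -> exists s, valid p s.
Proof.
case=> s0 h; exists (undup s0); split; first exact: undup_uniq.
by move=> w /eqP hw; rewrite mem_undup; apply/In_mem; apply: h.
Qed.

Lemma fmul_sum (V : lmodType C) (u p : seq I -> C) su sp (G : seq I -> V) :
  valid u su -> valid p sp ->
  valid (fmul u p) (undup [seq w1 ++ w2 | w1 <- su, w2 <- sp]) /\
  \sum_(w <- undup [seq w1 ++ w2 | w1 <- su, w2 <- sp]) fmul u p w *: G w =
  \sum_(w1 <- su) \sum_(w2 <- sp) (u w1 * p w2) *: G (w1 ++ w2).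
Proof.
move=> [uu hu] [up hp].
set s := undup _.
have vs : valid (fmul u p) s.
  split; first exact: undup_uniq.
  move=> w; apply: contraR => hw; apply/eqP; rewrite /fmul big1 // => k _.
  apply/eqP; rewrite mulf_eq0; apply/negPn/negP => /norP [h1 h2].
  apply: (negP hw); rewrite mem_undup -(cat_take_drop k w).
  by apply: allpairs_f; [apply: hu | apply: hp].
split => //.
pose H (x : seq I * seq I) := (u x.1 * p x.2) *: G (x.1 ++ x.2).
pose Pwk := [seq (w, k) | w <- s, k <- iota 0 (size w).+1].
pose Q := [seq (take x.2 x.1, drop x.2 x.1) | x <- Pwk].
have LHS : \sum_(w <- s) fmul u p w *: G w = \sum_(x <- Q) H x.
  rewrite big_map /Pwk big_allpairs_dep; apply: eq_bigr => w _.
  rewrite /fmul scaler_suml (@sum_ord_iota _ _ (fun k => (u (take k w) * p (drop k w)) *: G w)).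
  by apply: eq_bigr => k _; rewrite /H /= cat_take_drop.
have RHS : \sum_(w1 <- su) \sum_(w2 <- sp) (u w1 * p w2) *: G (w1 ++ w2) =
    \sum_(x <- [seq (w1, w2) | w1 <- su, w2 <- sp]) H x.
  by rewrite big_allpairs.
rewrite LHS RHS; apply: sum_indep.
- rewrite map_inj_in_uniq.
    apply: allpairs_uniq_dep; first exact: undup_uniq.
      by move=> w _; apply: iota_uniq.
    by move=> [a x] [b y] _ _ /= [-> ->].
  move=> [w1 k1] [w2 k2] h1 h2 /= [e1 e2].
  have hk1 : (k1 <= size w1)%N.
    move/allpairsPdep: h1 => [a [b [_ hb [-> ->]]]]; rewrite mem_iota in hb; lia.
  have hk2 : (k2 <= size w2)%N.
    move/allpairsPdep: h2 => [a [b [_ hb [-> ->]]]]; rewrite mem_iota in hb; lia.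
  have ew : w1 = w2 by rewrite -(cat_take_drop k1 w1) -(cat_take_drop k2 w2) e1 e2.
  subst w2.
  have : size (take k1 w1) = size (take k2 w1) by rewrite e1.
  rewrite !size_take_min => e; congr (_, _); lia.
- by apply: allpairs_uniq => // [[a b]] [a' b'] _ _ /= [-> ->].
- move=> [a b] hx; rewrite /H /= in hx.
  have [h1 h2] : u a != 0 /\ p b != 0.
    by move: hx; rewrite scaler_eq0 negb_or mulf_eq0 negb_or => /andP [/andP [-> ->]].
  apply/mapP; exists (a ++ b, size a); last by rewrite take_size_cat // drop_size_cat.
  apply/allpairsPdep; exists (a ++ b), (size a); split => //.
    by rewrite mem_undup; apply: allpairs_f; [apply: hu | apply: hp].
  by rewrite mem_iota size_cat /=; lia.
- move=> [a b] hx; rewrite /H /= in hx.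
  have [h1 h2] : u a != 0 /\ p b != 0.
    by move: hx; rewrite scaler_eq0 negb_or mulf_eq0 negb_or => /andP [/andP [-> ->]].
  by apply: allpairs_f; [apply: hu | apply: hp].
Qed.

Section WithB.
Variable B' : A -> Prop.
Hypotheses (HB' : subspace B') (HB'B : forall x, B' x -> Bsp x) (HB'1 : B' 1)
  (HB'dir : is_direct_sum Csp B' K).

Lemma B'C x : B' x -> Csp x. Proof. by move=> h; apply: HBC; apply: HB'B. Qed.
Lemma B'K0 x : B' x -> K x -> x = 0. Proof. by case: HB'dir => _; apply. Qed.

Lemma pi_ex c : exists b, Csp c -> B' b /\ K (c - b).
Proof.
case: (pselect (Csp c)) => hc; last by exists 0.
case: HB'dir => /(_ c) [/(_ hc) [p [q [hp hq ->]]] _] _.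
by exists p => _; split => //; rewrite addrC addKr.
Qed.
Definition pi c := proj1_sig (cid (pi_ex c)).
Lemma piP c : Csp c -> B' (pi c) /\ K (c - pi c).
Proof. exact: (proj2_sig (cid (pi_ex c))). Qed.
Lemma piB c : Csp c -> B' (pi c). Proof. by move/piP=> []. Qed.
Lemma piK c : Csp c -> K (c - pi c). Proof. by move/piP=> []. Qed.
Lemma pi_uniq c b : Csp c -> B' b -> K (c - b) -> pi c = b.
Proof.
move=> hc hb hk; apply/eqP; rewrite -subr_eq0; apply/eqP; apply: B'K0.
  by apply: (subB HB') => //; apply: piB.
have -> : pi c - b = (c - b) - (c - pi c) by rewrite [in RHS]opprB [in RHS]addrC [in RHS]addrA subrK.
by apply: (subB K_sub) => //; apply: piK.
Qed.
Lemma pi_id b : B' b -> pi b = b.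
Proof. by move=> hb; apply: pi_uniq => //; [apply: B'C | rewrite subrr; apply: (sub0 K_sub)]. Qed.
Lemma piD c1 c2 : Csp c1 -> Csp c2 -> pi (c1 + c2) = pi c1 + pi c2.
Proof.
move=> h1 h2; apply: pi_uniq; first by apply: (subD HC).
  by apply: (subD HB'); apply: piB.
have -> : c1 + c2 - (pi c1 + pi c2) = (c1 - pi c1) + (c2 - pi c2).
  by rewrite opprD addrACA.
by apply: (subD K_sub); apply: piK.
Qed.
Lemma piZ (a : C) c : Csp c -> pi (a *: c) = a *: pi c.
Proof.
move=> h; apply: pi_uniq; first by apply: (subZ HC).
  by apply: (subZ HB'); apply: piB.
by rewrite -scalerBr; apply: (subZ K_sub); apply: piK.
Qed.

Definition X i v := pi (gen i * v).
Lemma XB i v : B' v -> B' (X i v).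
Proof. by move=> h; apply: piB; apply: Bplus; apply: HB'B. Qed.
Lemma XK i v : B' v -> K (gen i * v - X i v).
Proof. by move=> h; apply: piK; apply: Bplus; apply: HB'B. Qed.
Lemma XD i v1 v2 : B' v1 -> B' v2 -> X i (v1 + v2) = X i v1 + X i v2.
Proof. by move=> h1 h2; rewrite /X mulrDr piD //; apply: Bplus; apply: HB'B. Qed.
Lemma XZ i (a : C) v : B' v -> X i (a *: v) = a *: X i v.
Proof. by move=> h; rewrite /X -scalerAr piZ //; apply: Bplus; apply: HB'B. Qed.

Definition R (w : seq I) v := foldr X v w.
Lemma R_nil v : R [::] v = v. Proof. by []. Qed.
Lemma R_cons i w v : R (i :: w) v = X i (R w v). Proof. by []. Qed.
Lemma R_cat w1 w2 v : R (w1 ++ w2) v = R w1 (R w2 v).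
Proof. by rewrite /R foldr_cat. Qed.
Lemma RB w v : B' v -> B' (R w v).
Proof. by move=> h; elim: w => [|i w IH] //=; apply: XB. Qed.
Lemma RD w v1 v2 : B' v1 -> B' v2 -> R w (v1 + v2) = R w v1 + R w v2.
Proof. by move=> h1 h2; elim: w => [|i w IH] //=; rewrite IH XD //; apply: RB. Qed.
Lemma RZ w (a : C) v : B' v -> R w (a *: v) = a *: R w v.
Proof. by move=> h; elim: w => [|i w IH] //=; rewrite IH XZ //; apply: RB. Qed.
Lemma R0 w : R w 0 = 0.
Proof. by have := @RZ w 0 0 (sub0 HB'); rewrite !scale0r. Qed.
Lemma Rsum (T : eqType) w (s : seq T) (c : T -> C) (F : T -> A) :
  (forall x, B' (F x)) -> R w (\sum_(x <- s) c x *: F x) = \sum_(x <- s) c x *: R w (F x).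
Proof.
move=> h; elim: s => [|x s IH]; first by rewrite !big_nil R0.
rewrite !big_cons RD ?RZ ?IH //; first by apply: (subZ HB').
by apply: (subsum HB') => y _; apply: (subZ HB').
Qed.

Lemma X_adj i x c : B' x -> B' c -> sf (X i x) c = sf x (X (J i) c).
Proof.
move=> hx hc.
have hxC := B'C _ hx; have hcC := B'C _ hc.
have g1 : Csp (gen i * x) by apply: Bplus; apply: HB'B.
have g2 : Csp (gen (J i) * c) by apply: Bplus; apply: HB'B.
have e1 : X i x = gen i * x - (gen i * x - X i x) by rewrite opprB addrC subrK.
have e2 : X (J i) c = gen (J i) * c - (gen (J i) * c - X (J i) c) by rewrite opprB addrC subrK.
have k1 := XK i x hx; have k2 := XK (J i) c hc.
have k1C := KC _ k1; have k2C := KC _ k2.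
rewrite e1 sfB1 // (K1 _ _ k1 hcC) subr0.
rewrite e2 sfB2 // (K2 _ _ k2 hxC) subr0.
by rewrite !sfE starM HJ' mulrA.
Qed.

Lemma R_adj w x c : B' x -> B' c -> sf (R w x) c = sf x (R (wstar w) c).
Proof.
elim: w x c => [|i w IH] x c hx hc //.
rewrite R_cons X_adj //; last by apply: RB.
rewrite IH; [|by []|by apply: XB].
by rewrite (wstar_cons i w) R_cat.
Qed.

Lemma Rword w v : (size w <= m)%N -> B' v ->
  prol_iter gen (size w) Bsp (word gen w * v) /\ K (word gen w * v - R w v).
Proof.
elim: w => [|i w IH] hs hv.
  rewrite word_nil mul1r /= subrr; split; [exact: HB'B | exact: (sub0 K_sub)].
have hs' : (size w <= m)%N by move: hs => /=; lia.
case: (IH hs' hv) => hp hk.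
have hr : B' (R w v) by apply: RB.
have e : word gen (i :: w) * v = gen i * (word gen w * v) by rewrite word_cons mulrA.
have hpro : prol_iter gen (size (i :: w)) Bsp (gen i * (word gen w * v)).
  by rewrite /=; apply: prol_gen.
rewrite e R_cons; split => //.
have hyC : Csp (gen i * (word gen w * v)) by apply: (prol_iter_C _ _ hs hpro).
have hrC : Csp (gen i * R w v) by apply: Bplus; apply: HB'B.
have hM : K (gen i * (word gen w * v - R w v)).
  apply: MK; first by apply: inspan_gen; right; exists i, (word gen w * v - R w v).
  by rewrite mulrBr; apply: (subB HC).
have -> : gen i * (word gen w * v) - X i (R w v) =
   gen i * (word gen w * v - R w v) + (gen i * R w v - X i (R w v)).
  by rewrite mulrBr addrA subrK.
by apply: (subD K_sub) => //; apply: XK.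
Qed.

Lemma Wlem w v c : (size w <= 2 * m)%N -> B' v -> B' c ->
  sq Csp (star c * (word gen w * v)) /\ sf (R w v) c = L (star c * (word gen w * v)).
Proof.
move=> hs hv hc.
pose k := (size w - m)%N.
have ew : w = take k w ++ drop k w by rewrite cat_take_drop.
have hu : (size (take k w) <= m)%N by rewrite size_take; case: ifP; rewrite /k; lia.
have ht : (size (drop k w) <= m)%N by rewrite size_drop /k; lia.
have hu' : (size (wstar (take k w)) <= m)%N by rewrite size_wstar.
case: (Rword _ _ ht hv) => hp1 hk1.
case: (Rword _ _ hu' hc) => hp2 hk2.
have y1C := prol_iter_C _ _ ht hp1.
have y2C := prol_iter_C _ _ hu' hp2.
have x1B := RB (drop k w) _ hv.
have x2B := RB (wstar (take k w)) _ hc.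
have x1C := B'C _ x1B; have x2C := B'C _ x2B.
have k1C := KC _ hk1; have k2C := KC _ hk2.
have eprod : star (word gen (wstar (take k w)) * c) * (word gen (drop k w) * v) =
    star c * (word gen w * v).
  by rewrite starM star_word {3}ew word_cat !mulrA.
split; first by rewrite -eprod; apply: sqs.
rewrite {1}ew R_cat R_adj //.
set x1 := R (drop k w) v; set x2 := R (wstar (take k w)) c.
set y1 := word gen (drop k w) * v; set y2 := word gen (wstar (take k w)) * c.
have e1 : x1 = y1 - (y1 - x1) by rewrite opprB addrC subrK.
have e2 : x2 = y2 - (y2 - x2) by rewrite opprB addrC subrK.
rewrite e1 sfB1 // (K1 _ _ hk1 x2C) subr0.
rewrite e2 sfB2 // (K2 _ _ hk2 y1C) subr0.
by rewrite sfE eprod.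
Qed.

Definition Evl s (p : seq I -> C) v := \sum_(w <- s) p w *: R w v.
Lemma EvlB s p v : B' v -> B' (Evl s p v).
Proof. by move=> hv; apply: (subsum HB') => w _; apply: (subZ HB'); apply: RB. Qed.
Lemma Eval_indep p s1 s2 v : valid p s1 -> valid p s2 -> Evl s1 p v = Evl s2 p v.
Proof. exact: valid_sum. Qed.

Lemma valid_fin p s : valid p s -> fin_supp p.
Proof. by case=> _ h; exists s => w /eqP hw; apply/In_mem; apply: h. Qed.

Lemma nondeg b : B' b -> (forall c, B' c -> sf b c = 0) -> b = 0.
Proof.
move=> hb h; apply: B'K0 => //; have hbC := B'C _ hb; split => // y hy.
case: HB'dir => /(_ y) [/(_ hy) [p [q [hp hq ->]]] _] _.
have hpC := B'C _ hp; have hqC := KC _ hq.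
by rewrite sfD2 // h // (K2 _ _ hq hbC) addr0.
Qed.

Lemma sf_sum1 (T : eqType) (s : seq T) (c : T -> C) (F : T -> A) y :
  (forall x, Csp (F x)) -> Csp y ->
  sf (\sum_(x <- s) c x *: F x) y = \sum_(x <- s) c x * sf (F x) y.
Proof.
move=> hF hy; elim: s => [|x s IH]; first by rewrite !big_nil sf0l.
rewrite !big_cons sfD1 //; first by rewrite sfZ1 // IH.
  by apply: (subZ HC).
by apply: (subsum HC) => z _; apply: (subZ HC).
Qed.

Lemma Kill_gen p : index_le p (2 * m) -> ker_sigma gen p ->
  forall s, valid p s -> forall v, B' v -> Evl s p v = 0.
Proof.
move=> hi [s0 [nd cov e0]] s vs v hv.
have vs0 : valid p s0.
  split; first by apply/NoDup_uniq.
  by move=> w /eqP hw; apply/In_mem; apply: cov.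
apply: nondeg; first exact: EvlB.
move=> c hc; have hcC := B'C _ hc.
rewrite /Evl sf_sum1 //; last by move=> w; apply: B'C; apply: RB.
have hterm : forall w, sq Csp (star c * ((p w *: word gen w) * v)) /\
    p w * sf (R w v) c = L (star c * ((p w *: word gen w) * v)).
  move=> w; case: (eqVneq (p w) 0) => [->|pw].
    by rewrite mul0r scale0r mul0r mulr0 L0; split => //; apply: (sub0 sq_sub).
  have hs : (size w <= 2 * m)%N by apply: hi; apply/eqP.
  case: (Wlem w v c hs hv hc) => hsq ->.
  rewrite -scalerAl -scalerAr LZ //; split => //; exact: (subZ sq_sub).
transitivity (L (star c * ((\sum_(w <- s) p w *: word gen w) * v))).
  rewrite mulr_suml mulr_sumr Lsum; last by move=> w _; case: (hterm w).
  by apply: eq_bigr => w _; case: (hterm w).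
by rewrite (valid_sum _ _ _ _ (word gen) vs vs0) -e0 mul0r mulr0 L0.
Qed.

Lemma Kill (S : fpoly C I -> Prop) :
  (forall p, ker_sigma gen p <-> ideal_gen S p) ->
  (forall p, S p -> index_le p (2 * m)) ->
  forall p, ideal_gen S p ->
  fin_supp p /\ forall s, valid p s -> forall v, B' v -> Evl s p v = 0.
Proof.
move=> HS1 HS2 p; elim => {p}.
- move=> p hp; have hk : ker_sigma gen p by apply/HS1; apply: ig_gen.
  split; last exact: Kill_gen (HS2 p hp) hk.
  by case: hk => s0 [_ cov _]; exists s0.
- split; first by exists [::].
  by move=> s _ v _; rewrite /Evl big1 // => w _; rewrite scale0r.
- move=> p q _ [fp hp] _ [fq hq].
  case: (fin_valid _ fp) => sp [_ cp]; case: (fin_valid _ fq) => sq' [_ cq].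
  pose s0 := undup (sp ++ sq').
  have vp : valid p s0.
    by split; [exact: undup_uniq | move=> w hw; rewrite mem_undup mem_cat cp].
  have vq : valid q s0.
    by split; [exact: undup_uniq | move=> w hw; rewrite mem_undup mem_cat cq ?orbT].
  have vpq : valid (fadd p q) s0.
    split; first exact: undup_uniq.
    move=> w hw; rewrite mem_undup mem_cat.
    case: (eqVneq (p w) 0) => [e|/cp -> //]; rewrite /fadd e add0r in hw.
    by rewrite cq ?orbT.
  split; first exact: (valid_fin _ _ vpq).
  move=> s vs v hv; rewrite (Eval_indep _ _ _ _ vs vpq) /Evl.
  under eq_bigr do rewrite /fadd scalerDl.
  by rewrite big_split /= -/(Evl s0 p v) -/(Evl s0 q v) hp // hq // addr0.
- move=> u p fu _ [fp hp].
  case: (fin_valid _ fu) => su vsu; case: (fin_valid _ fp) => sp vsp.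
  have [vm _] := fmul_sum _ _ _ _ _ (fun w => R w 0) vsu vsp.
  split; first exact: (valid_fin _ _ vm).
  move=> s vs v hv; rewrite (Eval_indep _ _ _ _ vs vm) /Evl.
  have [_ ->] := fmul_sum _ _ _ _ _ (fun w => R w v) vsu vsp.
  rewrite big1 // => w1 _.
  transitivity (u w1 *: R w1 (Evl sp p v)).
    rewrite /Evl Rsum; last by move=> x; apply: RB.
    rewrite scaler_sumr; apply: eq_bigr => w2 _.
    by rewrite scalerA R_cat.
  by rewrite hp // R0 scaler0.
- move=> p u fu _ [fp hp].
  case: (fin_valid _ fu) => su vsu; case: (fin_valid _ fp) => sp vsp.
  have [vm _] := fmul_sum _ _ _ _ _ (fun w => R w 0) vsp vsu.
  split; first exact: (valid_fin _ _ vm).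
  move=> s vs v hv; rewrite (Eval_indep _ _ _ _ vs vm) /Evl.
  have [_ ->] := fmul_sum _ _ _ _ _ (fun w => R w v) vsp vsu.
  transitivity (Evl sp p (Evl su u v)); last by rewrite hp //; apply: EvlB.
  rewrite /Evl; apply: eq_bigr => w1 _.
  rewrite Rsum; last by move=> x; apply: RB.
  rewrite scaler_sumr; apply: eq_bigr => w2 _.
  by rewrite scalerA R_cat.
- move=> p q e _ [fp hp]; split.
  by case: fp => s0 h; exists s0 => w; rewrite -e; apply: h.
  move=> s [us vs] v hv.
  have vps : valid p s by split => // w; rewrite e; apply: vs.
  rewrite -(hp s vps v hv) /Evl; apply: eq_bigr => w _; by rewrite e.
Qed.

Lemma valid_undupl p s t : valid p s -> valid p (undup (s ++ t)).
Proof. by case=> _ h; split; [exact: undup_uniq | move=> w /h hw; rewrite mem_undup mem_cat hw]. Qed.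
Lemma valid_undupr p s t : valid p t -> valid p (undup (s ++ t)).
Proof. by case=> _ h; split; [exact: undup_uniq | move=> w /h hw; rewrite mem_undup mem_cat hw orbT]. Qed.

Definition Rep p s a := valid p s /\ a = \sum_(w <- s) p w *: word gen w.
Lemma rep_ex a : exists ps : (seq I -> C) * seq (seq I), Rep ps.1 ps.2 a.
Proof.
case: (Hgen a) => p [s [nd cov e]]; exists (p, s); split => //=.
split; first by apply/NoDup_uniq.
by move=> w /eqP hw; apply/In_mem; apply: cov.
Qed.
Definition rp a := proj1_sig (cid (rep_ex a)).
Lemma rpP a : Rep (rp a).1 (rp a).2 a.
Proof. exact: (proj2_sig (cid (rep_ex a))). Qed.
Definition rho a v := Evl (rp a).2 (rp a).1 v.

Lemma rho_rep p s a v : Rep p s a -> B' v -> rho a v = Evl s p v.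
Proof.
case: Hdelta => S [HS1 HS2] [vp ep] hv.
case: (rpP a) => vq eq.
set q := (rp a).1 in vq eq *; set t := (rp a).2 in vq eq *.
rewrite /rho -/q -/t.
pose d w := p w - q w.
pose s0 := undup (s ++ t).
have vp0 : valid p s0 by apply: valid_undupl.
have vq0 : valid q s0 by apply: valid_undupr.
have vd0 : valid d s0.
  split; first exact: undup_uniq.
  move=> w hw; case: (eqVneq (p w) 0) => [e|/(proj2 vp0) //].
  by apply: (proj2 vq0); apply: contraNneq hw => e'; rewrite /d e e' subrr.
have hk : ker_sigma gen d.
  exists s0; split.
  - by apply/NoDup_uniq; exact: undup_uniq.
  - by move=> w /eqP hw; apply/In_mem; apply: (proj2 vd0).
  - rewrite /d; under eq_bigr do rewrite scalerBl.
    rewrite sumrB (valid_sum _ _ _ _ (word gen) vp0 vp) (valid_sum _ _ _ _ (word gen) vq0 vq).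
    by rewrite -ep -eq subrr.
have H0 := (proj2 (Kill S HS1 HS2 d (proj1 (HS1 d) hk))) s0 vd0 v hv.
have E : Evl s0 p v = Evl s0 q v.
  move: H0; rewrite /Evl; under eq_bigr do rewrite /d scalerBl.
  by rewrite sumrB => /eqP; rewrite subr_eq0 => /eqP.
by rewrite -(Eval_indep _ _ _ _ vp0 vp) E (Eval_indep _ _ _ _ vq0 vq).
Qed.

Lemma rhoB a v : B' v -> B' (rho a v). Proof. exact: EvlB. Qed.

Lemma rho_add a b v : B' v -> rho (a + b) v = rho a v + rho b v.
Proof.
move=> hv; case: (rpP a) => va ea; case: (rpP b) => vb eb.
set p := (rp a).1 in va ea *; set s := (rp a).2 in va ea *.
set q := (rp b).1 in vb eb *; set t := (rp b).2 in vb eb *.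
have vp0 : valid p (undup (s ++ t)) by apply: valid_undupl.
have vq0 : valid q (undup (s ++ t)) by apply: valid_undupr.
have vpq : valid (fadd p q) (undup (s ++ t)).
  split; first exact: undup_uniq.
  move=> w hw; case: (eqVneq (p w) 0) => [e|/(proj2 vp0) //].
  by apply: (proj2 vq0); rewrite /fadd e add0r in hw.
rewrite (rho_rep (fadd p q) (undup (s ++ t))) //.
  rewrite /rho -/p -/s -/q -/t /Evl; under eq_bigr do rewrite /fadd scalerDl.
  rewrite big_split /= -/(Evl _ p v) -/(Evl _ q v).
  by rewrite (Eval_indep _ _ _ _ vp0 va) (Eval_indep _ _ _ _ vq0 vb).
split => //; under eq_bigr do rewrite /fadd scalerDl.
rewrite big_split /= (valid_sum _ _ _ _ (word gen) vp0 va) (valid_sum _ _ _ _ (word gen) vq0 vb).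
by rewrite -ea -eb.
Qed.

Lemma rho_scale (c : C) a v : B' v -> rho (c *: a) v = c *: rho a v.
Proof.
move=> hv; case: (rpP a) => va ea.
set p := (rp a).1 in va ea *; set s := (rp a).2 in va ea *.
have vc : valid (fun w => c * p w) s.
  by case: va => u h; split => // w hw; apply: h; apply: contraNneq hw => ->; rewrite mulr0.
have rc : Rep (fun w => c * p w) s (c *: a).
  split => //; rewrite {1}ea scaler_sumr; apply: eq_bigr => w _; by rewrite scalerA.
rewrite (rho_rep _ _ _ _ rc hv) /rho -/p -/s /Evl scaler_sumr.
by apply: eq_bigr => w _; rewrite scalerA.
Qed.

Lemma rho_zero v : B' v -> rho 0 v = 0.
Proof.
move=> hv; have r0 : Rep (fun _ => 0) [::] 0.
  by split; [split => // w; rewrite eqxx | rewrite big_nil].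
by rewrite (rho_rep _ _ _ _ r0 hv) /Evl big_nil.
Qed.

Lemma rho_word w v : B' v -> rho (word gen w) v = R w v.
Proof.
move=> hv; have rw : Rep (fun w' => (w' == w)%:R) [:: w] (word gen w).
  split.
    split => // w' hw'; rewrite inE; apply/negPn/negP => hn.
    by move: hw'; rewrite (negbTE hn) mulr0n eqxx.
  by rewrite big_cons big_nil eqxx scale1r addr0.
by rewrite (rho_rep _ _ _ _ rw hv) /Evl big_cons big_nil eqxx scale1r addr0.
Qed.

Lemma rho_sum (T : eqType) (s : seq T) (c : T -> C) (F : T -> A) v : B' v ->
  rho (\sum_(x <- s) c x *: F x) v = \sum_(x <- s) c x *: rho (F x) v.
Proof.
move=> hv; elim: s => [|x s IH]; first by rewrite !big_nil rho_zero.
by rewrite !big_cons rho_add // rho_scale // IH.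
Qed.

Lemma rho_Dv a v1 v2 : B' v1 -> B' v2 -> rho a (v1 + v2) = rho a v1 + rho a v2.
Proof.
move=> h1 h2; rewrite /rho /Evl -big_split /=; apply: eq_bigr => w _.
by rewrite RD // scalerDr.
Qed.
Lemma rho_Zv a (c : C) v : B' v -> rho a (c *: v) = c *: rho a v.
Proof.
move=> h; rewrite /rho /Evl scaler_sumr; apply: eq_bigr => w _.
by rewrite RZ // !scalerA mulrC.
Qed.

Lemma rho_mul a b v : B' v -> rho (a * b) v = rho a (rho b v).
Proof.
move=> hv; case: (rpP a) => va ea; case: (rpP b) => vb eb.
set p := (rp a).1 in va ea *; set s := (rp a).2 in va ea *.
set q := (rp b).1 in vb eb *; set t := (rp b).2 in vb eb *.
have key : forall w, rho (word gen w * b) v = R w (rho b v).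
  move=> w; rewrite {1}eb mulr_sumr.
  under eq_bigr do rewrite -scalerAr -word_cat.
  rewrite rho_sum //.
  transitivity (\sum_(w' <- t) q w' *: R w (R w' v)).
    by apply: eq_bigr => w' _; rewrite rho_word // R_cat.
  rewrite /rho -/q -/t /Evl Rsum //; by move=> x; apply: RB.
transitivity (rho (\sum_(w <- s) p w *: (word gen w * b)) v).
  by rewrite {1}ea mulr_suml; congr (rho _ v); apply: eq_bigr => w _; rewrite scalerAl.
rewrite rho_sum //; under eq_bigr do rewrite key.
by rewrite /rho -/p -/s.
Qed.

Lemma rho_one v : B' v -> rho 1 v = v.
Proof. by move=> hv; rewrite -word_nil rho_word. Qed.
Lemma rho_gen i v : B' v -> rho (gen i) v = X i v.
Proof.
move=> hv; have -> : gen i = word gen [:: i] by rewrite word_cons word_nil mulr1.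
by rewrite rho_word.
Qed.

Lemma star_word' w : star (word gen w) = word gen (wstar w).
Proof.
elim: w => [|i w IH].
  by have -> : wstar [::] = [::] by []; rewrite word_nil star1.
by rewrite word_cons starM IH HJ wstar_cons word_cat word_cons word_nil mulr1.
Qed.

Lemma sf_sum2 (T : eqType) (s : seq T) (c : T -> C) (F : T -> A) x :
  (forall y, Csp (F y)) -> Csp x ->
  sf x (\sum_(y <- s) c y *: F y) = \sum_(y <- s) (c y)^* * sf x (F y).
Proof.
move=> hF hx; elim: s => [|y s IH]; first by rewrite !big_nil sfE star0 mul0r L0.
rewrite !big_cons sfD2 //; first by rewrite sfZ2 // IH.
  by apply: (subZ HC).
by apply: (subsum HC) => z _; apply: (subZ HC).
Qed.

Lemma rho_adj a x c : B' x -> B' c -> sf (rho a x) c = sf x (rho (star a) c).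
Proof.
move=> hx hc; case: (rpP a) => va ea.
set p := (rp a).1 in va ea *; set s := (rp a).2 in va ea *.
have es : star a = \sum_(w <- s) (p w)^* *: word gen (wstar w).
  rewrite {1}ea star_sum; apply: eq_bigr => w _; by rewrite starZ star_word'.
rewrite es rho_sum //.
have -> : \sum_(w <- s) (p w)^* *: rho (word gen (wstar w)) c =
    \sum_(w <- s) (p w)^* *: R (wstar w) c.
  by apply: eq_bigr => w _; rewrite rho_word.
rewrite sf_sum2; first last.
- exact: B'C.
- by move=> w; apply: B'C; apply: RB.
rewrite /rho -/p -/s /Evl sf_sum1; first last.
- exact: B'C.
- by move=> w; apply: B'C; apply: RB.
apply: eq_bigr => w _; by rewrite conjCK R_adj.
Qed.

Definition Phi a := rho a 1.
Lemma PhiB a : B' (Phi a). Proof. exact: rhoB. Qed.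
Lemma PhiC a : Csp (Phi a). Proof. exact: B'C (PhiB a). Qed.
Lemma PhiD a b : Phi (a + b) = Phi a + Phi b. Proof. exact: rho_add. Qed.
Lemma PhiZ (c : C) a : Phi (c *: a) = c *: Phi a. Proof. exact: rho_scale. Qed.
Lemma Phi0 : Phi 0 = 0. Proof. exact: rho_zero. Qed.
Lemma PhiN a : Phi (- a) = - Phi a.
Proof. by rewrite -scaleN1r PhiZ scaleN1r. Qed.
Lemma PhiB' a b : Phi (a - b) = Phi a - Phi b. Proof. by rewrite PhiD PhiN. Qed.
Lemma Phi_mul a b : Phi (a * b) = rho a (Phi b). Proof. exact: rho_mul. Qed.

Lemma Phi_C c : Csp c -> K (c - Phi c).
Proof.
case: HconC => _ [Vs [hsub [h0 [hmono [hsubC [hcover hprol]]]]]] hc.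
case: (hcover c hc) => l; elim: l c {hc} => [|l IH] y hy.
  case/h0: hy => c ->; rewrite PhiZ /Phi rho_one // subrr.
  exact: (sub0 K_sub).
have hyC := hsubC _ _ hy.
apply: MK; last by apply: (subB HC) => //; apply: PhiC.
have := hprol _ _ hy; elim => {y hy hyC}.
- move=> x [hx|[i [z [hz ->]]]].
    by apply: inspan_gen; left; apply: IH.
  have -> : gen i * z - Phi (gen i * z) =
      gen i * (z - Phi z) + (gen i * Phi z - X i (Phi z)).
    by rewrite Phi_mul rho_gen; [rewrite mulrBr addrA subrK | exact: PhiB].
  apply: inspanD; first by apply: inspan_gen; right; exists i, (z - Phi z); split => //; apply: IH.
  by apply: inspan_gen; left; apply: XK; apply: PhiB.
- by rewrite Phi0 subrr; apply: inspan0.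
- move=> x y _ hx _ hy.
  have -> : x + y - Phi (x + y) = (x - Phi x) + (y - Phi y) by rewrite PhiD opprD addrACA.
  exact: inspanD.
- move=> c x _ hx.
  by rewrite PhiZ -scalerBr; apply: inspanZ.
Qed.

Lemma Phi_id b : B' b -> Phi b = b.
Proof.
move=> hb; apply/eqP; rewrite -subr_eq0; apply/eqP; apply: B'K0.
  by apply: (subB HB') => //; apply: PhiB.
rewrite -opprB; apply: (subN K_sub); apply: Phi_C; exact: B'C.
Qed.
Lemma Phi1 : Phi 1 = 1. Proof. exact: Phi_id. Qed.

Definition LL a := L (Phi a).

Lemma LL_sf x y : sform star LL x y = sf (Phi x) (Phi y).
Proof.
rewrite /sform /LL Phi_mul -sf1 rho_adj; [by rewrite starK | exact: PhiB | exact: HB'1].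
Qed.

Lemma LL_lin : linear_on (fun _ => True) LL.
Proof.
split=> [x y _ _|c x _]; rewrite /LL.
  by rewrite PhiD LD //; apply: sqC; apply: PhiC.
by rewrite PhiZ LZ //; apply: sqC; apply: PhiC.
Qed.

Lemma LL_herm : hermitian_on star (fun _ => True) LL.
Proof.
move=> b _; rewrite /LL -!sf1 /Phi rho_adj // starK.
by rewrite sfconj //; [exact: C1 | exact: PhiC].
Qed.

Lemma LL_ext x : sq Csp x -> LL x = L x.
Proof.
rewrite /LL; elim => {x}.
- move=> x [a [b [ha hb ->]]].
  rewrite Phi_mul -sf1 rho_adj; [|exact: PhiB|exact: HB'1].
  have hsa : Csp (star a) by apply: HCs.
  have k1 := Phi_C _ hb; have k2 := Phi_C _ hsa.
  have k1C := KC _ k1; have k2C := KC _ k2.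
  have p1 := PhiC b; have p2 := PhiC (star a).
  have e1 : Phi b = b - (b - Phi b) by rewrite opprB addrC subrK.
  have e2 : rho (star a) 1 = star a - (star a - Phi (star a)) by rewrite opprB addrC subrK.
  rewrite e2 sfB2 // (K2 _ _ k2 p1) subr0.
  rewrite e1 sfB1 // (K1 _ _ k1 hsa) subr0.
  by rewrite sfE starK.
- by rewrite /= Phi0.
- move=> x y hx ex hy ey.
  rewrite /= PhiD LD ?ex ?ey ?LD //; apply: sqC; apply: PhiC.
- move=> c x hx ex.
  rewrite /= PhiZ LZ ?ex ?LZ //; apply: sqC; apply: PhiC.
Qed.

Notation KL := (kerL star LL (fun _ => True)).

Lemma KL_Phi y : KL y <-> Phi y = 0.
Proof.
split.
- case=> _ h; apply: nondeg; first exact: PhiB.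
  move=> c hc; have := h c Logic.I; by rewrite LL_sf (Phi_id c hc).
- by move=> e; split => // b _; rewrite LL_sf e sf0l.
Qed.

Lemma KL_sub y : KL (y - Phi y).
Proof. by apply/KL_Phi; rewrite PhiB' (Phi_id (Phi y) (PhiB y)) subrr. Qed.

Lemma LL_sum (V : A -> Prop) : (forall x, B' x -> V x) -> is_sum (fun _ => True) V KL.
Proof.
move=> hV x; split => // _; exists (Phi x), (x - Phi x); split.
- by apply: hV; apply: PhiB.
- exact: KL_sub.
- by rewrite addrC subrK.
Qed.

Lemma LL_dir : is_direct_sum (fun _ => True) B' KL.
Proof.
split; first by apply: LL_sum.
by move=> x hx /KL_Phi; rewrite Phi_id.
Qed.

Lemma LL_nondeg b : B' b -> (forall b', B' b' -> sform star LL b b' = 0) -> b = 0.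
Proof.
move=> hb h; apply: nondeg => // c hc; have := h c hc.
by rewrite LL_sf !Phi_id.
Qed.

Lemma LL_sumT (T : eqType) (s : seq T) (c : T -> C) (F : T -> A) (LL' : A -> C) :
  linear_on (fun _ => True) LL' ->
  LL' (\sum_(x <- s) c x *: F x) = \sum_(x <- s) c x * LL' (F x).
Proof.
case=> hD hZ; elim: s => [|x s IH].
  by rewrite !big_nil; have := hZ 0 0 Logic.I; rewrite scale0r mul0r.
by rewrite !big_cons hD // hZ // IH.
Qed.

Lemma LL_unique (LL' : A -> C) :
  linear_on (fun _ => True) LL' ->
  hermitian_on star (fun _ => True) LL' ->
  (forall x, sq Csp x -> LL' x = L x) ->
  is_sum (fun _ => True) Csp (kerL star LL' (fun _ => True)) ->
  forall x, LL' x = LL x.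
Proof.
move=> hlin hh hext hsum.
have [hD hZ] := hlin.
have NZ : forall c x, kerL star LL' (fun _ => True) x -> kerL star LL' (fun _ => True) (c *: x).
  move=> c x [_ h]; split => // b _; have := h b Logic.I.
  by rewrite /sform -scalerAr hZ // => ->; rewrite mulr0.
have ND : forall x y, kerL star LL' (fun _ => True) x -> kerL star LL' (fun _ => True) y ->
    kerL star LL' (fun _ => True) (x + y).
  move=> x y [_ h1] [_ h2]; split => // b _; have := h1 b Logic.I; have := h2 b Logic.I.
  by rewrite /sform mulrDr hD // => -> ->; rewrite addr0.
have NB : forall x y, kerL star LL' (fun _ => True) x -> kerL star LL' (fun _ => True) y ->
    kerL star LL' (fun _ => True) (x - y).
  move=> x y h1 h2; apply: ND => //; rewrite -scaleN1r; exact: NZ.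
have Ngen : forall i n, kerL star LL' (fun _ => True) n -> kerL star LL' (fun _ => True) (gen i * n).
  move=> i n [_ h]; split => // b _.
  rewrite /sform mulrA -HJ' -starM; exact: (h _ Logic.I).
have herm : forall x, LL' x = (LL' (star x))^*.
  by move=> x; rewrite hh // conjCK.
have KN : forall k, K k -> kerL star LL' (fun _ => True) k.
  move=> k hk; split => // b _.
  case: (proj1 (hsum b) Logic.I) => c [n [hc [_ hn] ->]].
  rewrite /sform starD mulrDl hD //.
  rewrite hext; last by apply: sqs => //; apply: KC.
  rewrite -sfE (K1 _ _ hk hc) add0r.
  by rewrite herm starM starK; have := hn k Logic.I; rewrite /sform => ->; rewrite conjC0.
have Nw : forall w v, B' v -> kerL star LL' (fun _ => True) (word gen w * v - R w v).
  elim => [|i w IH] v hv.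
    by rewrite word_nil mul1r subrr; apply: KN; exact: (sub0 K_sub).
  have -> : word gen (i :: w) * v - R (i :: w) v =
      gen i * (word gen w * v - R w v) + (gen i * R w v - X i (R w v)).
    by rewrite word_cons R_cons -mulrA mulrBr addrA subrK.
  apply: ND; first by apply: Ngen; apply: IH.
  by apply: KN; apply: XK; apply: RB.
have Lw : forall w, LL' (word gen w) = L (R w 1).
  move=> w; have [_ h] := Nw w 1 HB'1.
  have h0 := h 1 Logic.I; rewrite /sform star1 mul1r mulr1 in h0.
  rewrite -[word gen w](subrK (R w 1)) hD // h0 add0r hext //.
  by apply: sqC; apply: B'C; apply: RB.
move=> x; case: (rpP x) => vx ex.
rewrite {1}ex LL_sumT // /LL /Phi /rho /Evl Lsum; last first.
  by move=> w _; apply: sqC; apply: (subZ HC); apply: B'C; apply: RB.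
by apply: eq_bigr => w _; rewrite Lw LZ //; apply: sqC; apply: B'C; apply: RB.
Qed.

Lemma LL_pos : positive_on star Csp L -> positive_on star (fun _ => True) LL.
Proof.
move=> hp a _; have := LL_sf a a; rewrite /sform => ->.
exact: hp _ (PhiC a).
Qed.

Lemma LL_definite : positive_on star Csp L ->
  forall b, B' b -> b <> 0 -> 0 < sform star LL b b.
Proof.
move=> hp b hb hb0; have hbC := B'C _ hb.
rewrite LL_sf (Phi_id _ hb).
have ge : 0 <= sf b b := hp b hbC.
rewrite lt_neqAle ge andbT; apply/eqP => e0.
apply: hb0; apply: nondeg => // c hc; have hcC := B'C _ hc.
suff ez : sf c b = 0 by rewrite (sfconj _ _ hbC hcC) ez conjC0.
apply/eqP/negPn/negP => hz.
have hg : 0 <= sf c c := hp c hcC.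
have zz0 : sf c b * (sf c b)^* != 0 by rewrite mul_conjC_eq0.
pose s := (sf c c + 1) / (sf c b * (sf c b)^*).
have s0 : 0 <= s.
  rewrite /s; apply: mulr_ge0; first by apply: addr_ge0.
  by rewrite invr_ge0 mul_conjC_ge0.
have sc : s^* = s by apply: geC0_conj.
pose t := - (s * sf c b).
have hy : Csp (c + t *: b) by apply: (subD HC) => //; apply: (subZ HC).
have hpos := hp _ hy; rewrite -sfE in hpos.
have htb : Csp (t *: b) by apply: (subZ HC).
rewrite sfD1 // sfD2 // sfZ2 // sfZ1 // sfD2 // sfZ2 // -e0 in hpos.
rewrite (sfconj _ _ hbC hcC) /t in hpos.
have et : (- (s * sf c b))^* = - (s * (sf c b)^*) by rewrite rmorphN rmorphM /= sc.
rewrite et /s in hpos.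
have E : sf c c + - ((sf c c + 1) / (sf c b * (sf c b)^*) * (sf c b)^*) * sf c b +
    - ((sf c c + 1) / (sf c b * (sf c b)^*) * sf c b) *
      ((sf c b)^* + - ((sf c c + 1) / (sf c b * (sf c b)^*) * (sf c b)^*) * 0) =
    - (sf c c + 2).
  by field; rewrite hz andbT conjC_eq0.
rewrite E oppr_ge0 in hpos.
have h2 : 0 < sf c c + 2 by rewrite ltr_wpDl // ltr0n.
by have := le_lt_trans hpos h2; rewrite ltxx.
Qed.

Lemma LL_pi : exists pi : A -> A,
  (forall x, B' (pi x)) /\ (forall x, KL (x - pi x)) /\
  (forall c, Csp c -> K (c - pi c)) /\
  star_rep star B' (sform star LL) (fun a b => pi (a * b)) /\
  (forall a, LL a = sform star LL (pi (a * 1)) 1).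
Proof.
exists Phi; split; first exact: PhiB.
split; first exact: KL_sub.
split; first exact: Phi_C.
split; last by move=> a; rewrite LL_sf mulr1 (Phi_id _ (PhiB a)) Phi1 sf1.
split; first by move=> a v _; exact: PhiB.
split; first by move=> a v w _ _; rewrite mulrDr PhiD.
split; first by move=> a c v _; rewrite -scalerAr PhiZ.
split; first by move=> a b v _; rewrite mulrDl PhiD.
split; first by move=> c a v _; rewrite -scalerAl PhiZ.
split.
  move=> a b v hv.
  have e1 : Phi (a * b * v) = rho a (Phi (b * v)) by rewrite -mulrA Phi_mul.
  have e2 : Phi (a * Phi (b * v)) = rho a (Phi (b * v)).
    by rewrite Phi_mul (Phi_id (Phi (b * v)) (PhiB (b * v))).
  by rewrite e1 e2.
split; first by move=> v hv; rewrite mul1r Phi_id.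
move=> a v w hv hw; rewrite !LL_sf.
rewrite (Phi_id _ (PhiB (a * v))) (Phi_id _ (PhiB (star a * w))) !Phi_mul.
by rewrite rho_adj //; apply: PhiB.
Qed.

Lemma construction : exists LL0 : A -> C,
  linear_on (fun _ => True) LL0 /\
  hermitian_on star (fun _ => True) LL0 /\
  (forall x, sq Csp x -> LL0 x = L x) /\
  is_sum (fun _ => True) Csp (kerL star LL0 (fun _ => True)) /\
  is_sum (fun _ => True) Bsp (kerL star LL0 (fun _ => True)) /\
  (forall LL' : A -> C,
      linear_on (fun _ => True) LL' ->
      hermitian_on star (fun _ => True) LL' ->
      (forall x, sq Csp x -> LL' x = L x) ->
      is_sum (fun _ => True) Csp (kerL star LL' (fun _ => True)) ->
      forall x, LL' x = LL0 x) /\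
  (positive_on star Csp L -> positive_on star (fun _ => True) LL0) /\
  is_direct_sum (fun _ => True) B' (kerL star LL0 (fun _ => True)) /\
  (forall b, B' b -> (forall b', B' b' -> sform star LL0 b b' = 0) -> b = 0) /\
  (exists pi : A -> A,
    (forall x, B' (pi x)) /\
    (forall x, kerL star LL0 (fun _ => True) (x - pi x)) /\
    (forall c, Csp c -> kerL star L Csp (c - pi c)) /\
    star_rep star B' (sform star LL0) (fun a b => pi (a * b)) /\
    (forall a, LL0 a = sform star LL0 (pi (a * 1)) 1)) /\
  (positive_on star Csp L -> forall b, B' b -> b <> 0 -> 0 < sform star LL0 b b).
Proof.
exists LL; split; first exact: LL_lin.
split; first exact: LL_herm.
split; first exact: LL_ext.
split; first by apply: LL_sum; exact: B'C.
split; first by apply: LL_sum; exact: HB'B.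
split; first exact: LL_unique.
split; first exact: LL_pos.
split; first exact: LL_dir.
split; first exact: LL_nondeg.
split; first exact: LL_pi.
exact: LL_definite.
Qed.
End WithB.

Section Zorn.
Hypothesis HconB : connected_to_1 gen Bsp.

Lemma K1_zero : K 1 -> forall x, sq Csp x -> L x = 0.
Proof.
move=> hK1.
have LC : forall c, Csp c -> L c = 0.
  move=> c hc; have := K1 _ _ hK1 (HCs _ hc); rewrite sfE starK mulr1 //.
case: HconB => hB1 [Vs [hsub [h0 [hmono [hsubB [hcover hprol]]]]]].
have claim : forall l v, Vs l v -> forall a, Csp a -> L (star v * a) = 0.
  elim => [|l IH] v hv.
    case/h0: hv => c -> a ha; rewrite starZ star1 -scalerAl mul1r LZ ?LC ?mulr0 //.
    exact: sqC.
  have := hprol _ _ hv.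
  have H : forall x, prol gen (Vs l) x -> Csp x /\ forall a, Csp a -> L (star x * a) = 0.
    move=> x; elim => {x}.
    - move=> x [hx|[i [z [hz ->]]]].
        by split; [apply: HBC; apply: hsubB hx | apply: IH].
      have hzB := hsubB _ _ hz.
      split; first by apply: Bplus.
      move=> a ha; case: (flat_dec _ ha) => b [k [hb hk ->]].
      have hgC : Csp (gen i * z) by apply: Bplus.
      rewrite mulrDr LD; first last.
      + by apply: sqs => //; apply: KC.
      + by apply: sqs => //; apply: HBC.
      have e2 : L (star (gen i * z) * k) = 0 := K1 _ _ hk hgC.
      rewrite e2 addr0 starM HJ -mulrA.
      by apply: IH => //; apply: Bplus.
    - split; first exact: (sub0 HC).
      by move=> a _; rewrite star0 mul0r L0.
    - move=> x y _ [hx ex] _ [hy ey]; split; first exact: (subD HC).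
      move=> a ha; rewrite starD mulrDl LD ?ex ?ey ?addr0 //; exact: sqs.
    - move=> c x _ [hx ex]; split; first exact: (subZ HC).
      move=> a ha; rewrite starZ -scalerAl LZ ?ex ?mulr0 //; exact: sqs.
  by move/H => [_]; apply.
move=> x; elim => {x}.
- move=> x [a [b [ha hb ->]]].
  case: (flat_dec _ (HCs _ ha)) => b' [k [hb' hk e]].
  rewrite -(starK a) e starD mulrDl LD; first last.
  + by apply: sqs => //; apply: KC.
  + by apply: sqs => //; apply: HBC.
  have e2 : L (star k * b) = 0 := K2 _ _ hk hb.
  rewrite e2 addr0.
  case: (hcover _ hb') => l hl; exact: claim hl _ hb.
- exact: L0.
- by move=> x y hx ex hy ey; rewrite LD // ex ey addr0.
- by move=> c x hx ex; rewrite LZ // ex mulr0.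
Qed.

Definition good (W : A -> Prop) :=
  [/\ subspace W, forall x, W x -> Bsp x, W 1 & forall x, W x -> K x -> x = 0].

Lemma B'_exists : (exists x, sq Csp x /\ L x <> 0) ->
  exists B' : A -> Prop, subspace B' /\ (forall x, B' x -> Bsp x) /\ B' 1 /\
    is_direct_sum Csp B' K.
Proof.
move=> [x0 [hx0 Lx0]].
have n1K : ~ K 1 by move=> h; apply: Lx0; apply: K1_zero.
have hB1 : Bsp 1 by case: HconB.
pose P (W : set A) := W = set0 \/ good W.
have [W [PW Wmax]] : exists W, P W /\ (forall B, (W `<` B)%classic -> ~ P B).
  apply: Zorn_bigcup => F FP Ftot.
  case: (pselect (exists X, F X /\ good X)) => [[X0 [FX0 gX0]]|nog]; last first.
    left; apply/seteqP; split => x // [X FX Xx].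
    case: (FP X FX) => [eX|gX]; first by rewrite eX in Xx.
    by exfalso; apply: nog; exists X.
  have gF : forall X, F X -> (exists x, X x) -> good X.
    move=> X FX [x Xx]; case: (FP X FX) => // eX; by rewrite eX in Xx.
  right; split.
  - split.
    + exists X0 => //; by case: gX0 => [[]].
    + move=> x y [X FX Xx] [Y FY Yy].
      case: (Ftot X Y FX FY) => hXY.
      * have gY : good Y by apply: gF FY _; exists y.
        exists Y => //; case: gY => sY _ _ _; apply: (subD sY) => //; exact: hXY.
      * have gX : good X by apply: gF FX _; exists x.
        exists X => //; case: gX => sX _ _ _; apply: (subD sX) => //; exact: hXY.
    + move=> c x [X FX Xx]; exists X => //.
      have gX : good X by apply: gF FX _; exists x.
      by case: gX => sX _ _ _; apply: (subZ sX).
  - move=> x [X FX Xx]; have gX : good X by apply: gF FX _; exists x.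
    by case: gX => _ h _ _; apply: h.
  - by exists X0 => //; case: gX0.
  - move=> x [X FX Xx]; have gX : good X by apply: gF FX _; exists x.
    by case: gX => _ _ _; apply.
have gW : good W.
  case: PW => // eW; exfalso.
  pose W1 := fun x : A => exists c : C, x = c *: 1.
  apply: (Wmax W1); first split.
  - by rewrite eW => x.
  - by rewrite eW => /(_ 1); apply; exists 1; rewrite scale1r.
  right; split.
  - split; first by exists 0; rewrite scale0r.
    + by move=> x y [a ->] [b ->]; exists (a + b); rewrite scalerDl.
    + by move=> c x [a ->]; exists (c * a); rewrite scalerA.
  - by move=> x [a ->]; apply: (subZ HB).
  - by exists 1; rewrite scale1r.
  - move=> x [a ->] hK; case: (eqVneq a 0) => [->|a0]; first by rewrite scale0r.
    exfalso; apply: n1K; have := subZ K_sub a^-1 _ hK.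
    by rewrite scalerA mulVf // scale1r.
case: gW => sW WB W1 WK.
exists W; do 3 (split => //); split; last exact: WK.
move=> x; split; last first.
  move=> [p [q [hp hq ->]]]; apply: (subD HC); [apply: HBC; exact: WB | exact: KC].
move=> hx; case: (flat_dec _ hx) => b [k [hb hk ->]].
suff [p [q [hp hq ->]]] : exists p q, [/\ W p, K q & b = p + q].
  exists p, (q + k); split => //; first exact: (subD K_sub).
  by rewrite addrA.
case: (pselect (exists p q, [/\ W p, K q & b = p + q])) => // nb.
exfalso.
pose W' := fun x : A => exists a c, W a /\ x = a + c *: b.
apply: (Wmax W'); first split.
- by move=> y Wy; exists y, 0; rewrite scale0r addr0.
- move=> hsub; apply: nb; exists b, 0; split => //; last by rewrite addr0.
    by apply: hsub; exists 0, 1; rewrite scale1r add0r; split => //; apply: (sub0 sW).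
  exact: (sub0 K_sub).
right; split.
- split.
  + by exists 0, 0; rewrite scale0r addr0; split => //; apply: (sub0 sW).
  + move=> y z [a [c [ha ->]]] [a' [c' [ha' ->]]]; exists (a + a'), (c + c').
    by split; [apply: (subD sW) | rewrite scalerDl addrACA].
  + move=> d y [a [c [ha ->]]]; exists (d *: a), (d * c).
    by split; [apply: (subZ sW) | rewrite scalerDr scalerA].
- move=> y [a [c [ha ->]]]; apply: (subD HB); [exact: WB | exact: (subZ HB)].
- by exists 1, 0; rewrite scale0r addr0.
- move=> y [a [c [ha ->]]] hK.
  case: (eqVneq c 0) => [c0|c0].
    by move: hK; rewrite c0 scale0r addr0 => hK; apply: WK.
  exfalso; apply: nb; exists (- (c^-1 *: a)), (c^-1 *: (a + c *: b)); split.
  + by apply: (subN sW); apply: (subZ sW).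
  + exact: (subZ K_sub).
  + by rewrite scalerDr scalerA mulVf // scale1r addrA addNr add0r.
Qed.
End Zorn.
End Main.

Theorem theorem3p1
  (C : numClosedFieldType) (A : algType C) (star : A -> A)
  (I : Type) (gen : I -> A)
  (Bsp Csp : A -> Prop) (m : nat) (L : A -> C) :
  is_involution star ->
  generates gen ->
  (forall i, exists j, star (gen i) = gen j) ->
  subspace Bsp -> star_invariant star Bsp ->
  subspace Csp -> star_invariant star Csp ->
  (forall x, Bsp x -> Csp x) ->
  connected_to_1 gen Bsp -> connected_to_1 gen Csp ->
  (1 <= m)%N ->
  (forall x, prol_iter gen m Bsp x -> Csp x) ->
  delta_le gen (2 * m) ->
  linear_on (sq Csp) L -> hermitian_on star (sq Csp) L ->
  is_sum Csp Bsp (kerL star L Csp) ->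
  exists LL : A -> C,
    (* (1) existence *)
    linear_on (fun _ => True) LL /\
    hermitian_on star (fun _ => True) LL /\
    (forall x, sq Csp x -> LL x = L x) /\
    is_sum (fun _ => True) Csp (kerL star LL (fun _ => True)) /\
    is_sum (fun _ => True) Bsp (kerL star LL (fun _ => True)) /\
    (* (1) uniqueness *)
    (forall LL' : A -> C,
        linear_on (fun _ => True) LL' ->
        hermitian_on star (fun _ => True) LL' ->
        (forall x, sq Csp x -> LL' x = L x) ->
        is_sum (fun _ => True) Csp (kerL star LL' (fun _ => True)) ->
        forall x, LL' x = LL x) /\
    (* (2) a choice of B' is possible unless L == 0 *)
    ((exists x, sq Csp x /\ L x <> 0) ->
      exists B' : A -> Prop,
        subspace B' /\ (forall x, B' x -> Bsp x) /\ B' 1 /\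
        is_direct_sum Csp B' (kerL star L Csp)) /\
    (* (3) positivity of LL *)
    (positive_on star Csp L -> positive_on star (fun _ => True) LL) /\
    (* (2) and (3), for every admissible B' *)
    (forall B' : A -> Prop,
      subspace B' -> (forall x, B' x -> Bsp x) -> B' 1 ->
      is_direct_sum Csp B' (kerL star L Csp) ->
      is_direct_sum (fun _ => True) B' (kerL star LL (fun _ => True)) /\
      (forall b, B' b -> (forall b', B' b' -> sform star LL b b' = 0) -> b = 0) /\
      (exists pi : A -> A,
        (forall x, B' (pi x)) /\
        (forall x, kerL star LL (fun _ => True) (x - pi x)) /\
        (forall c, Csp c -> kerL star L Csp (c - pi c)) /\
        star_rep star B' (sform star LL) (fun a b => pi (a * b)) /\
        (forall a, LL a = sform star LL (pi (a * 1)) 1)) /\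
      (positive_on star Csp L ->
        forall b, B' b -> b <> 0 -> 0 < sform star LL b b)).
Proof.
move=> Hinv Hgen Hgs HB HBs HC HCs HBC HconB HconC Hm Hpro Hdelta HLlin HLh Hflat.
pose I' := {classic I}.
pose gen' : I' -> A := gen.
have Hgen' : generates gen' := Hgen.
have Hgs' : forall i : I', exists j, star (gen' i) = gen' j := Hgs.
have Hpro' : forall x, prol_iter gen' m Bsp x -> Csp x := Hpro.
have Hdelta' : delta_le gen' (2 * m) := Hdelta.
have HconB' : connected_to_1 gen' Bsp := HconB.
have HconC' : connected_to_1 gen' Csp := HconC.
case: (pselect (exists B0 : A -> Prop, subspace B0 /\ (forall x, B0 x -> Bsp x) /\ B0 1 /\
          is_direct_sum Csp B0 (kerL star L Csp))) => [[B0 [s0 [b0 [o0 d0]]]]|nB].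
  have [LL0 [lin [herm [ext [sC [sB [uniq [pos [dir [nd [pi defin]]]]]]]]]]] :=
    construction _ _ _ _ gen' _ _ _ _ Hinv Hgen' Hgs' HC HCs HBC HconC' Hm Hpro' Hdelta' HLlin HLh Hflat B0 s0 b0 o0 d0.
  exists LL0; do 6 (split => //).
  split; first by move=> _; exists B0.
  split => // B' s' b' o' d'.
  have [LL1 [lin1 [herm1 [ext1 [sC1 [_ [_ [_ [dir1 [nd1 [pi1 def1]]]]]]]]]]] :=
    construction _ _ _ _ gen' _ _ _ _ Hinv Hgen' Hgs' HC HCs HBC HconC' Hm Hpro' Hdelta' HLlin HLh Hflat B' s' b' o' d'.
  have e : LL1 = LL0 by apply: funext => x; apply: uniq.
  by subst LL1.
have L0all : forall x, sq Csp x -> L x = 0.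
  move=> x hx; apply/eqP; apply/negPn/negP => /eqP hL.
  apply: nB; apply: (B'_exists _ _ _ _ gen' _ _ _ _ Hinv Hgs' HB HC HCs HBC HconC' Hm Hpro' HLlin HLh Hflat HconB').
  by exists x.
have C0 : Csp 0 by case: HC.
exists (fun _ => 0).
split; first by split => *; rewrite ?addr0 ?mulr0.
split; first by move=> b _; rewrite conjC0.
split; first by move=> x hx; rewrite L0all.
split; first by move=> x; split => // _; exists 0, x; rewrite add0r.
split; first by move=> x; split => // _; exists 0, x; split; [case: HB| |rewrite add0r].
split.
  move=> LL' [hD hZ] hh hext hsum x.
  case: (proj1 (hsum x) Logic.I) => c [n [hc [_ hn] ->]].
  rewrite hD // hext; last by apply: inspan_gen; exists c, 1; split => //; [case: HconC | rewrite mulr1].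
  rewrite L0all; last by apply: inspan_gen; exists c, 1; split => //; [case: HconC | rewrite mulr1].
  have := hn 1 Logic.I; rewrite /sform.
  have -> : star 1 = 1.
    case: Hinv => _ _ hM hK; have h := hM (star 1) 1.
    by rewrite mulr1 hK mulr1 in h.
  by rewrite mul1r => ->; rewrite addr0.
split; first by move=> h; exfalso; apply: nB; apply: (B'_exists _ _ _ _ gen' _ _ _ _ Hinv Hgs' HB HC HCs HBC HconC' Hm Hpro' HLlin HLh Hflat HconB').
split; first by move=> _ a _.
by move=> B' s' b' o' d'; exfalso; apply: nB; exists B'.
Qed.
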